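(* Let $\boldsymbol\alpha$ be a fixed static allocation in the setting described in the context. Then $$\min_{j\ne i^*}\mathrm{LDR}_{j,i^*}\;\ge\;\underline{\mathrm{LDR}}:=\min_{(i,\theta_b)\in\Xi}W_i(\theta_b)G_i(\theta_b),$$ where $\mathrm{LDR}_{j,i^*}:=\min_{\mathbf M\in\mathcal A_j}\sum_{(i,\theta_b)\in I(\mathbf M)}G_i(\theta_b)$.
   Context: There are $k\ge2$ solutions and $B$ parameter values $\theta_1,\dots,\theta_B$ with probabilities $p_1,\dots,p_B>0$, $\sum_bp_b=1$. For each $i,b$, $y_i(\theta_b)$ is the mean simulation output of solution $i$ at $\theta_b$, with simulation variance $\lambda_i^2(\theta_b)>0$. Each $i^b=\arg\min_iy_i(\theta_b)$ is assumed unique, and $i^*=\arg\max_i\sum_bp_b\mathbf 1\{i=i^b\}$ is assumed unique. Favorable sets: $\Theta_i=\{\theta_b:i^b=i\}$. A static allocation is $\boldsymbol\alpha$ with $\alpha_i(\theta_b)\ge0$, $\sum_{i,b}\alpha_i(\theta_b)=1$. For $i\ne i^b$, $$G_i(\theta_b)=\frac{(y_i(\theta_b)-y_{i^b}(\theta_b))^2}{2\left(\lambda_i^2(\theta_b)/\alpha_i(\theta_b)+\lambda_{i^b}^2(\theta_b)/\alpha_{i^b}(\theta_b)\right)},$$ with $G_i(\theta_b)=0$ if $\alpha_i(\theta_b)=0$ or $\alpha_{i^b}(\theta_b)=0$. Let $\mathcal M=\{\mathbf M\in\{0,1\}^{k\times B}:\mathbf M^\top\mathbf 1_k=\mathbf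 1_B\}$ with entries $m_{i,b}$; $d_j(\mathbf M)=\sum_bp_bm_{i^*,b}-\sum_bp_bm_{j,b}$; $I(\mathbf M)=\{(i,\theta_b):m_{i,b}=1,i\ne i^b\}$; for $j\ne i^*$, $\mathcal A_j=\{\mathbf M\in\mathcal M:d_j(\mathbf M)\le0\}$. Let $d_j=\sum_bp_b\mathbf 1\{i^*=i^b\}-\sum_bp_b\mathbf 1\{j=i^b\}$. Let $\Xi=\{(i,\theta_b):i\ne i^*,i\ne i^b\}$. Balance weights: $W_i(\theta_b)=\infty$ for $(i,\theta_b)\notin\Xi$, and for $(i,\theta_b)\in\Xi$, $$W_i(\theta_b)=\begin{cases}\max\left\{\min\left(\min_{j\ne i^*}d_j,\ d_i/2\right)/p_b,\ 1\right\},&\theta_b\in\Theta_{i^*},\\ \max\{d_i/p_b,1\},&\theta_b\notin\Theta_{i^*}.\end{cases}$$ *)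

(* Defs.v *)
From HB Require Import structures.
From mathcomp Require Import all_boot all_order all_algebra.
From mathcomp Require Import constructive_ereal.
Set Implicit Arguments. Unset Strict Implicit. Unset Printing Implicit Defensive.
Import Order.TTheory GRing.Theory Num.Theory.
Local Open Scope ring_scope.

Section Defs.
Variables (R : realFieldType) (k B : nat).

Definition Gfun (y lam alpha : 'I_k -> 'I_B -> R) (ibest : 'I_B -> 'I_k)
    (i : 'I_k) (b : 'I_B) : R :=
  if (alpha i b == 0) || (alpha (ibest b) b == 0) then 0 else
  (y i b - y (ibest b) b) ^+ 2 /
    (2 * (lam i b ^+ 2 / alpha i b + lam (ibest b) b ^+ 2 / alpha (ibest b) b)).

Definition inMset (M : 'M[bool]_(k, B)) : bool :=
  [forall b : 'I_B, (\sum_(i < k) (M i b : nat))%N == 1%N].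

Definition dM (p : 'I_B -> R) (istar j : 'I_k) (M : 'M[bool]_(k, B)) : R :=
  \sum_(b < B) p b * (M istar b)%:R - \sum_(b < B) p b * (M j b)%:R.

Definition inIM (ibest : 'I_B -> 'I_k) (M : 'M[bool]_(k, B)) (ib : 'I_k * 'I_B)
  : bool := M ib.1 ib.2 && (ib.1 != ibest ib.2).

Definition inA (p : 'I_B -> R) (istar j : 'I_k) (M : 'M[bool]_(k, B)) : bool :=
  inMset M && (dM p istar j M <= 0).

Definition LDR (p : 'I_B -> R) (y lam alpha : 'I_k -> 'I_B -> R)
    (ibest : 'I_B -> 'I_k) (istar j : 'I_k) : \bar R :=
  \big[Order.min/+oo%E]_(M : 'M[bool]_(k, B) | inA p istar j M)
     (\sum_(ib : 'I_k * 'I_B | inIM ibest M ib) Gfun y lam alpha ibest ib.1 ib.2)%:E.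

Definition dtrue (p : 'I_B -> R) (ibest : 'I_B -> 'I_k) (istar j : 'I_k) : R :=
  \sum_(b < B) p b * (istar == ibest b)%:R - \sum_(b < B) p b * (j == ibest b)%:R.

Definition inXi (ibest : 'I_B -> 'I_k) (istar : 'I_k) (ib : 'I_k * 'I_B) : bool :=
  (ib.1 != istar) && (ib.1 != ibest ib.2).

Definition Wfun (p : 'I_B -> R) (ibest : 'I_B -> 'I_k) (istar : 'I_k)
    (i : 'I_k) (b : 'I_B) : \bar R :=
  if ~~ inXi ibest istar (i, b) then +oo%E else
  if ibest b == istar then
    Order.max
      ((Order.min (\big[Order.min/+oo%E]_(j < k | j != istar) (dtrue p ibest istar j)%:E)
                  (dtrue p ibest istar i / 2)%:E) * ((p b)^-1)%:E)%E
      1%E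
  else Order.max ((dtrue p ibest istar i / p b)%:E) 1%E.

Definition LDRlow (p : 'I_B -> R) (y lam alpha : 'I_k -> 'I_B -> R)
    (ibest : 'I_B -> 'I_k) (istar : 'I_k) : \bar R :=
  \big[Order.min/+oo%E]_(ib : 'I_k * 'I_B | inXi ibest istar ib)
     (Wfun p ibest istar ib.1 ib.2 * (Gfun y lam alpha ibest ib.1 ib.2)%:E)%E.

End Defs.

(* Main.v *)
Require Import Defs.
From HB Require Import structures.
From mathcomp Require Import all_boot all_order all_algebra.
From mathcomp Require Import constructive_ereal.
From mathcomp Require Import lra.
Import Order.TTheory GRing.Theory Num.Theory.
Local Open Scope ring_scope.

Theorem theorem2 (R : realFieldType) (k B : nat) (hk : (2 <= k)%N)
  (p : 'I_B -> R) (hp : forall b, 0 < p b) (hp1 : \sum_(b < B) p b = 1)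
  (y lam : 'I_k -> 'I_B -> R) (hlam : forall i b, 0 < lam i b ^+ 2)
  (ibest : 'I_B -> 'I_k)
  (hibest : forall b i, i != ibest b -> y (ibest b) b < y i b)
  (istar : 'I_k)
  (histar : forall i, i != istar ->
     \sum_(b < B) p b * (i == ibest b)%:R < \sum_(b < B) p b * (istar == ibest b)%:R)
  (alpha : 'I_k -> 'I_B -> R) (halpha0 : forall i b, 0 <= alpha i b)
  (halpha1 : \sum_(i < k) \sum_(b < B) alpha i b = 1) :
  (LDRlow p y lam alpha ibest istar
     <= \big[Order.min/+oo%E]_(j < k | j != istar) LDR p y lam alpha ibest istar j)%E.
Proof.
set d := dtrue p ibest istar.
have d_gt0 : forall j, j != istar -> 0 < d j.
  by move=> j hj; rewrite /d /dtrue subr_gt0; exact: histar.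
set G := Gfun y lam alpha ibest.
have G_ge0 : forall i b, 0 <= G i b.
  move=> i b; rewrite /G /Gfun; case: ifP => // _.
  apply: divr_ge0; first exact: sqr_ge0.
  apply: mulr_ge0 => //; apply: addr_ge0; apply: divr_ge0 => //; exact: ltW.
have [j1 j1n] : exists j1, j1 != istar.
  have h0 : (0 < k)%N by apply: leq_trans hk.
  have h1 : (1 < k)%N by [].
  case: (eqVneq istar (Ordinal h0)) => e.
  - by exists (Ordinal h1); rewrite e; apply/eqP => /(congr1 val).
  - by exists (Ordinal h0); rewrite eq_sym.
set mE := (\big[Order.min/+oo%E]_(j < k | j != istar) (d j)%:E)%E.
have [mr [mEr [mr_gt0 mr_le]]] : exists mr, mE = mr%:E /\ 0 < mr /\
    forall j, j != istar -> mr <= d j.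
  have := @bigmin_eq_arg _ _ _ +oo%E j1 (fun j => j != istar) (fun j => (d j)%:E) j1n.
  case: arg_minP => // jm jmn _ /(_ (fun _ _ => leey _)) e.
  exists (d jm); split; first exact: e.
  split; first exact: d_gt0.
  move=> j jn; rewrite -lee_fin -e; exact: bigmin_le_cond.
set x := fun i b => if ibest b == istar then Num.min mr (d i / 2) / p b else d i / p b.
have hW : forall i b, inXi ibest istar (i, b) ->
    Wfun p ibest istar i b = (Num.max (x i b) 1)%:E.
  move=> i b hX; rewrite /Wfun hX /= -/d -/mE mEr /x.
  by case: ifP => _; rewrite ?EFin_max -?EFin_min -?EFinM.
have x_gt0 : forall i b, inXi ibest istar (i, b) -> 0 < x i b.
  move=> i b /andP[/= hi _]; rewrite /x; case: ifP => _; apply: divr_gt0 => //;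
    last exact: d_gt0.
  by rewrite lt_min mr_gt0 /= divr_gt0 // d_gt0.
apply: le_bigmin; first exact: leey.
move=> j jn; rewrite /LDR.
apply: le_bigmin; first exact: leey.
move=> M /andP[hMset hdM].
set S := \sum_(ib | inIM ibest M ib) Gfun y lam alpha ibest ib.1 ib.2.
pose P' (c : 'I_k * 'I_B) := inXi ibest istar c && inIM ibest M c.
have S_ge : forall c, inIM ibest M c -> G c.1 c.2 <= S.
  move=> c hc; rewrite /S (bigD1 c) //= lerDl; apply: sumr_ge0 => *; exact: G_ge0.
suff [c /andP[hc1 hc2]] : exists c, inXi ibest istar c &&
    (Num.max (x c.1 c.2) 1 * G c.1 c.2 <= S).
  rewrite /LDRlow; apply: (bigmin_inf c) => //.
  by case: c hc1 hc2 => i b hc1 hc2; rewrite hW // -EFinM lee_fin.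
case: (boolP [exists c, [&& inXi ibest istar c, inIM ibest M c &
    (Num.max (x c.1 c.2) 1 * G c.1 c.2 <= S)]]).
  by move=> /existsP [c /and3P[h1 h2 h3]]; exists c; rewrite h1 h3.
move=> /existsPn hno; exfalso.
have hlt : forall c, P' c -> 1 < x c.1 c.2 /\ S < x c.1 c.2 * G c.1 c.2.
  move=> c /andP[h1 h2]; have := hno c; rewrite h1 h2 /= -ltNge => hS.
  have hx1 : 1 < x c.1 c.2.
    rewrite ltNge; apply/negP => hx.
    move: hS; rewrite (max_r hx) mul1r => hS.
    by have := S_ge c h2; rewrite leNgt hS.
  by split => //; move: hS; rewrite (max_l (ltW hx1)).
set T := \sum_(c | P' c) (x c.1 c.2)^-1.
have T_ge1 : 1 <= T.
  pose e b := ((istar == ibest b)%:R - (j == ibest b)%:R - (M istar b)%:R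
     + (M j b)%:R : R).
  have hsum : \sum_b p b * e b = d j - dM p istar j M.
    rewrite /e /d /dtrue /dM.
    under eq_bigr do rewrite mulrDr !mulrBr.
    rewrite !(big_split, sumrN) /=; lra.
  have hT : T = \sum_b \sum_(i | P' (i,b)) (x i b)^-1.
    rewrite (eq_bigr (fun b => \sum_i if P' (i,b) then (x i b)^-1 else 0));
      last by move=> b _; exact: big_mkcond.
    rewrite exchange_big pair_big /= /T big_mkcond /=.
    by apply: eq_bigr => -[i b] _.
  have col : forall b, p b * e b <= d j * \sum_(i | P' (i,b)) (x i b)^-1.
    move=> b.
    have /sum_nat_eq1 [a [_ Ma hz]] := (forallP hMset) b.
    have hM : forall i, M i b = (i == a).
      move=> i; case: eqVneq => [->|h]; first by case: (M a b) Ma.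
      by have := hz i h isT; case: (M i b).
    have dj := d_gt0 j jn.
    have hR : d j * (if (a != istar) && (a != ibest b) then (x a b)^-1 else 0)
        <= d j * \sum_(i | P' (i,b)) (x i b)^-1.
      rewrite ler_pM2l //; case: ifP => h.
      - move: h => /andP[h1 h2].
        rewrite (bigD1 a) /=; last by rewrite /P' /inXi /inIM /= hM eqxx h1 h2.
        rewrite lerDl; apply: sumr_ge0 => i /andP[/andP[Pi _] _].
        by rewrite invr_ge0 ltW // x_gt0.
      - apply: sumr_ge0 => i /andP[Pi _].
        by rewrite invr_ge0 ltW // x_gt0.
    apply: le_trans hR; rewrite /e !hM.
    have pb := hp b.
    case: (eqVneq a (ibest b)) => [<-|hab].
      rewrite /= andbF mulr0; lra.
    rewrite /= andbT /x.
    case: (eqVneq (ibest b) istar) => hb.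
    - rewrite ?hb ?eqxx ?(negbTE jn).
      have ha : a != istar by rewrite -hb.
      rewrite ha /= (eq_sym istar a) (negbTE ha) /=.
      have hm : 0 < Num.min mr (d a / 2) by rewrite lt_min mr_gt0 /= divr_gt0 // d_gt0.
      rewrite invf_div mulrA ler_pdivlMr //.
      case: (eqVneq j a) => [<-|hja] /=.
      + have : Num.min mr (d j / 2) <= d j / 2 by rewrite ge_min lexx orbT.
        rewrite ?mulr1n ?mulr0n; nra.
      + have : Num.min mr (d a / 2) <= d j by rewrite ge_min mr_le.
        rewrite ?mulr1n ?mulr0n; nra.
    - rewrite ?(eq_sym istar) ?(negbTE hb) /=.
      case: (eqVneq a istar) => [->|ha] /=.
        rewrite (negbTE jn) mulr0 ?mulr1n ?mulr0n.
        have : 0 <= ((j == ibest b)%:R : R) by rewrite ler0n.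
        nra.
      have da := d_gt0 a ha.
      case: (eqVneq j a) => [ja|hja] /=.
        rewrite ja (negbTE hab) invf_div mulrCA mulfV ?mulr1; [rewrite /= ?mulr0n; lra | exact: lt0r_neq0].
      have : 0 <= ((j == ibest b)%:R : R) by rewrite ler0n.
      have : 0 <= d j * (d a / p b)^-1 by rewrite mulr_ge0 // ?invr_ge0 ltW // divr_gt0.
      rewrite ?mulr1n ?mulr0n; nra.
  have : d j <= d j * T.
    rewrite hT mulr_sumr; apply: le_trans (ler_sum _ (fun b _ => col b)).
    rewrite hsum; lra.
  by rewrite ler_pMr ?d_gt0.
have [c0 Pc0] : exists c, P' c.
  case: (pickP P') => [c Pc|P0]; first by exists c.
  by move: T_ge1; rewrite /T big_pred0 // ler10.
have h1 : \sum_(c | P' c) G c.1 c.2 <= S.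
  rewrite /S big_mkcond [X in _ <= X]big_mkcond /=; apply: ler_sum => c _.
  rewrite /P'; case: (inIM ibest M c); rewrite ?andbT ?andbF //.
  by case: ifP => // _; exact: G_ge0.
have h2 : \sum_(c | P' c) S * (x c.1 c.2)^-1 < \sum_(c | P' c) G c.1 c.2.
  apply: ltr_sum; first by apply/hasP; exists c0; rewrite ?mem_index_enum.
  move=> c Pc; have [hx hS] := hlt c Pc.
  by rewrite ltr_pdivrMr ?(lt_trans ltr01 hx) // mulrC.
have S_ge0 : 0 <= S by apply: sumr_ge0 => *; exact: G_ge0.
have h3 : S <= S * T by rewrite ler_peMr.
move: h2; rewrite -mulr_sumr -/T => h2.
have := lt_le_trans (le_lt_trans h3 h2) h1; by rewrite ltxx.
Qed.
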